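(* Let $S$ be an inverse semigroup. The following are equivalent: (1) $S$ is quasi-finitely generated; (2) $S$ admits a uniformly proper, right-subinvariant, uniformly discrete extended metric whose components are the $\mathcal L$-classes.
   Context: An inverse semigroup is a semigroup $S$ in which every $s$ has a unique $s^{-1}$ with $ss^{-1}s=s$, $s^{-1}ss^{-1}=s^{-1}$; $E(S)$ denotes its idempotents. Green's relation $\mathcal L$: $(s,t)\in\mathcal L$ iff $s^{-1}s=t^{-1}t$. $S$ is quasi-finitely generated if there is a finite subset $\mathcal M=\mathcal M^{-1}$ with $S$ generated as a semigroup by $\mathcal M\cup E(S)$. An extended metric $d$ on $S$ (distances may be $\infty$) has components the $\mathcal L$-classes if $d(s,t)<\infty$ iff $(s,t)\in\mathcal L$. It is uniformly discrete if $\inf_{s\ne t}d(s,t)>0$; right-subinvariant if $d(sx,tx)\le d(s,t)$ for all $s,t,x\in S$; uniformly proper if there is a finite $F_1\subseteq S$ such that for every $r\ge0$ and all $x\ne y$ in $S$ with $d(x,y)\le r$ there is $f$, a product of at most $\lceil r\rceil$ elements of $F_1$, with $y=fx$. *)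

(* Defs.v *)
From Stdlib Require Import Reals List ZArith.
From Coquelicot Require Import Rbar.
Import ListNotations.
Open Scope R_scope.

Set Implicit Arguments.
Section InvSemigroup.
Variables (S : Type) (mul : S -> S -> S) (inv : S -> S).

Definition is_inverse_semigroup : Prop :=
  (forall a b c, mul a (mul b c) = mul (mul a b) c) /\
  (forall s, mul (mul s (inv s)) s = s /\ mul (mul (inv s) s) (inv s) = inv s) /\
  (forall s t, mul (mul s t) s = s -> mul (mul t s) t = t -> t = inv s).

Definition idempotent (e : S) : Prop := mul e e = e.

Definition L_rel (s t : S) : Prop := mul (inv s) s = mul (inv t) t.

Fixpoint sprod (a : S) (l : list S) : S :=
  match l with
  | [] => a
  | b :: l' => mul a (sprod b l')
  end.

Definition quasi_finitely_generated : Prop :=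
  exists M : list S,
    (forall m, In m M -> In (inv m) M) /\
    (forall s, exists a l, Forall (fun x => In x M \/ idempotent x) (a :: l)
                           /\ s = sprod a l).

Definition ext_metric (d : S -> S -> Rbar) : Prop :=
  (forall s t, Rbar_le (Finite 0) (d s t)) /\
  (forall s t, d s t = Finite 0 <-> s = t) /\
  (forall s t, d s t = d t s) /\
  (forall s t u, Rbar_le (d s u) (Rbar_plus (d s t) (d t u))).

Definition components_are_L_classes (d : S -> S -> Rbar) : Prop :=
  forall s t, is_finite (d s t) <-> L_rel s t.

Definition uniformly_discrete (d : S -> S -> Rbar) : Prop :=
  exists eps : R, 0 < eps /\ forall s t, s <> t -> Rbar_le (Finite eps) (d s t).

Definition right_subinvariant (d : S -> S -> Rbar) : Prop :=
  forall s t x, Rbar_le (d (mul s x) (mul t x)) (d s t).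

Definition Rceil (r : R) : Z := (- (up (- r) - 1))%Z.

Definition uniformly_proper (d : S -> S -> Rbar) : Prop :=
  exists F1 : list S,
    forall (r : R) (x y : S), 0 <= r -> x <> y -> Rbar_le (d x y) (Finite r) ->
      exists a l, Forall (fun z => In z F1) (a :: l) /\
                  (Z.of_nat (length (a :: l)) <= Rceil r)%Z /\
                  y = mul (sprod a l) x.

End InvSemigroup.

(* Main.v *)
Require Import Defs.
From Stdlib Require Import Reals List ZArith Lia Lra.
From Stdlib Require Import Classical ClassicalEpsilon.
From Coquelicot Require Import Rbar.
Import ListNotations.


Lemma assoc {S} {mul : S -> S -> S} {inv} (H : is_inverse_semigroup mul inv) a b c :
  mul a (mul b c) = mul (mul a b) c.
Proof. exact (proj1 H a b c). Qed.

Ltac norm H := repeat rewrite <- (assoc H).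
Ltac normin H h := repeat rewrite <- (assoc H) in h.

Lemma L1n {S} {mul : S -> S -> S} {inv} (H : is_inverse_semigroup mul inv) s :
  mul s (mul (inv s) s) = s.
Proof. rewrite (assoc H). apply (proj1 (proj2 H) s). Qed.
Lemma L2n {S} {mul : S -> S -> S} {inv} (H : is_inverse_semigroup mul inv) s :
  mul (inv s) (mul s (inv s)) = inv s.
Proof. rewrite (assoc H). apply (proj1 (proj2 H) s). Qed.
Lemma L1t {S} {mul : S -> S -> S} {inv} (H : is_inverse_semigroup mul inv) s y :
  mul s (mul (inv s) (mul s y)) = mul s y.
Proof. rewrite !(assoc H), <- (assoc H s), (L1n H); auto. Qed.
Lemma L2t {S} {mul : S -> S -> S} {inv} (H : is_inverse_semigroup mul inv) s y :
  mul (inv s) (mul s (mul (inv s) y)) = mul (inv s) y.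
Proof. rewrite !(assoc H), <- (assoc H (inv s)), (L2n H); auto. Qed.
Lemma uniq {S} {mul : S -> S -> S} {inv} (H : is_inverse_semigroup mul inv) s t :
  mul s (mul t s) = s -> mul t (mul s t) = t -> t = inv s.
Proof. intros h1 h2. apply (proj2 (proj2 H)); rewrite <- (assoc H); auto. Qed.
Lemma inv_inv {S} {mul : S -> S -> S} {inv} (H : is_inverse_semigroup mul inv) s :
  inv (inv s) = s.
Proof. symmetry; apply (uniq H). apply (L2n H). apply (L1n H). Qed.
Lemma idem_inv {S} {mul : S -> S -> S} {inv} (H : is_inverse_semigroup mul inv) e :
  mul e e = e -> inv e = e.
Proof. intro h. symmetry; apply (uniq H); rewrite !h; auto. Qed.
Lemma idem_t {S} {mul : S -> S -> S} {inv} (H : is_inverse_semigroup mul inv) e y :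
  mul e e = e -> mul e (mul e y) = mul e y.
Proof. intro h. rewrite (assoc H), h; auto. Qed.
Lemma iota_idem {S} {mul : S -> S -> S} {inv} (H : is_inverse_semigroup mul inv) s :
  mul (mul (inv s) s) (mul (inv s) s) = mul (inv s) s.
Proof. norm H. rewrite L2t; auto. Qed.
Lemma iota'_idem {S} {mul : S -> S -> S} {inv} (H : is_inverse_semigroup mul inv) s :
  mul (mul s (inv s)) (mul s (inv s)) = mul s (inv s).
Proof. norm H. rewrite L1t; auto. Qed.

Lemma comm {S} {mul : S -> S -> S} {inv} (H : is_inverse_semigroup mul inv) e f :
  mul e e = e -> mul f f = f -> mul e f = mul f e.
Proof.
  intros he hf.
  assert (key : forall e f, mul e e = e -> mul f f = f -> mul (mul e f) (mul e f) = mul e f).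
  { clear e f he hf. intros e f he hf.
    set (x := inv (mul e f)).
    assert (a1 : mul e (mul f (mul x (mul e f))) = mul e f).
    { pose proof (L1n H (mul e f)) as h. fold x in h. normin H h. exact h. }
    assert (a2 : forall y, mul x (mul e (mul f (mul x y))) = mul x y).
    { intro y. pose proof (L2t H (mul e f) y) as h. fold x in h. normin H h. exact h. }
    assert (hx : mul f (mul x e) = x).
    { unfold x. apply (uniq H).
      - norm H. rewrite (idem_t H f _ hf). fold x. rewrite (idem_t H e _ he). exact a1.
      - norm H. fold x. rewrite (idem_t H e _ he). rewrite (idem_t H f _ hf).
        rewrite a2. auto. }
    assert (xx : mul x x = x).
    { rewrite <- hx at 1 2. norm H. rewrite a2. exact hx. }
    assert (ex : mul e f = x).
    { rewrite <- (idem_inv H x xx). apply (uniq H).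
      - norm H. pose proof (L2n H (mul e f)) as h. fold x in h. normin H h. exact h.
      - norm H. exact a1. }
    rewrite ex. exact xx. }
  pose proof (key e f he hf) as k1. pose proof (key f e hf he) as k2.
  rewrite <- (idem_inv H _ k1). symmetry. apply (uniq H).
  - norm H. rewrite (idem_t H f _ hf). normin H k1. rewrite (idem_t H e _ he). 
    exact k1.
  - norm H. rewrite (idem_t H e _ he). normin H k2. rewrite (idem_t H f _ hf).
    exact k2.
Qed.

Lemma comm_t {S} {mul : S -> S -> S} {inv} (H : is_inverse_semigroup mul inv) e f y :
  mul e e = e -> mul f f = f -> mul e (mul f y) = mul f (mul e y).
Proof. intros he hf. rewrite !(assoc H), (comm H e f he hf). auto. Qed.

Lemma swap {S} {mul : S -> S -> S} {inv} (H : is_inverse_semigroup mul inv) a b y :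
  mul b (mul (inv b) (mul (inv a) (mul a y))) = mul (inv a) (mul a (mul b (mul (inv b) y))).
Proof.
  pose proof (comm_t H (mul b (inv b)) (mul (inv a) a) y (iota'_idem H b) (iota_idem H a)) as h.
  normin H h. exact h.
Qed.

Lemma inv_mul {S} {mul : S -> S -> S} {inv} (H : is_inverse_semigroup mul inv) a b :
  inv (mul a b) = mul (inv b) (inv a).
Proof.
  symmetry. apply (uniq H).
  - norm H. rewrite (swap H). rewrite (L1n H b). apply (L1t H).
  - norm H. rewrite <- (swap H). rewrite (L2t H b), (L2n H a). reflexivity.
Qed.

Definition iota {S} (mul : S -> S -> S) (inv : S -> S) s := mul (inv s) s.

Lemma iotaA {S} {mul : S -> S -> S} {inv} (H : is_inverse_semigroup mul inv) q z :
  mul (iota mul inv (mul q z)) (iota mul inv z) = iota mul inv (mul q z).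
Proof. unfold iota. norm H. rewrite (L1n H z). reflexivity. Qed.

Lemma iotaA' {S} {mul : S -> S -> S} {inv} (H : is_inverse_semigroup mul inv) gs z :
  mul (iota mul inv (fold_right mul z gs)) (iota mul inv z) = iota mul inv (fold_right mul z gs).
Proof.
  induction gs as [|g gs IH]; simpl.
  - apply (iota_idem H).
  - set (p := fold_right mul z gs) in *.
    rewrite <- (iotaA H g p) at 1. rewrite <- (assoc H), IH. apply (iotaA H).
Qed.

Lemma antisym {S} {mul : S -> S -> S} {inv} (H : is_inverse_semigroup mul inv) A B C :
  mul A A = A -> mul B B = B -> A = C -> mul A B = A -> mul B C = B -> B = A.
Proof.
  intros hA hB hAC h1 h2. subst C. rewrite <- h2, (comm H B A hB hA). exact h1.
Qed.

Lemma drop {S} {mul : S -> S -> S} {inv} (H : is_inverse_semigroup mul inv) g z :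
  mul g g = g -> iota mul inv (mul g z) = iota mul inv z -> mul g z = z.
Proof.
  unfold iota. intros hg h. rewrite (inv_mul H), (idem_inv H g hg) in h.
  normin H h. rewrite (idem_t H g _ hg) in h.
  transitivity (mul g (mul z (mul (inv z) z))). rewrite (L1n H); auto.
  pose proof (comm_t H (mul z (inv z)) g z (iota'_idem H z) hg) as c. normin H c.
  rewrite <- c, h. apply (L1n H).
Qed.

Lemma Key {S} {mul : S -> S -> S} {inv} (H : is_inverse_semigroup mul inv) (M : list S) gs :
  Forall (fun x => In x M \/ idempotent mul x) gs -> forall z,
  iota mul inv (fold_right mul z gs) = iota mul inv z ->
  exists w, Forall (fun x => In x M) w /\ fold_right mul z gs = fold_right mul z w.
Proof.
  induction gs as [|g gs IH]; intros hF z hz.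
  - exists []. split; auto.
  - inversion hF as [|? ? hg hF']; subst. simpl in *.
    set (z' := fold_right mul z gs) in *.
    assert (e : iota mul inv z' = iota mul inv z).
    { rewrite <- hz. apply (antisym H (iota mul inv (mul g z')) _ (iota mul inv z)).
      apply (iota_idem H). apply (iota_idem H). exact hz. apply (iotaA H). apply (iotaA' H). }
    destruct (IH hF' z e) as [w [hw ew]].
    destruct hg as [hg|hg].
    + exists (g :: w). split. constructor; auto. simpl. rewrite <- ew. reflexivity.
    + exists w. split; auto. rewrite <- ew. apply (drop H). exact hg. fold z'. rewrite hz, e. reflexivity.
Qed.

Lemma sprod_fold {S} (mul : S -> S -> S) {inv} (H : is_inverse_semigroup mul inv) a l x :
  mul (sprod mul a l) x = fold_right mul x (a :: l).
Proof.
  revert a. induction l as [|b l IH]; intro a; simpl. reflexivity.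
  rewrite <- (assoc H), IH. reflexivity.
Qed.

Lemma fold_mul {S} (mul : S -> S -> S) {inv} (H : is_inverse_semigroup mul inv) w x z :
  mul (fold_right mul x w) z = fold_right mul (mul x z) w.
Proof. induction w; simpl. reflexivity. rewrite <- (assoc H), IHw. reflexivity. Qed.

Lemma sprod_snoc {S} (mul : S -> S -> S) {inv} (H : is_inverse_semigroup mul inv) a l e :
  sprod mul a (l ++ [e]) = mul (sprod mul a l) e.
Proof.
  revert a. induction l as [|b l IH]; intro a; simpl. reflexivity.
  rewrite IH, (assoc H). reflexivity.
Qed.

Lemma least (P : nat -> Prop) : (exists n, P n) -> exists n, P n /\ forall m, P m -> (n <= m)%nat.
Proof.
  intros [n0 h0]. apply NNPP. intro hn.
  assert (forall n k, (k <= n)%nat -> ~ P k).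
  { induction n; intros k hk hP.
    - apply hn. exists k. split; auto. lia.
    - destruct (Nat.eq_dec k (S n)).
      + subst. apply hn. exists (S n). split; auto. intros m hm.
        destruct (le_lt_dec (S n) m); auto. exfalso. apply (IHn m); auto; lia.
      + apply (IHn k); auto; lia. }
  apply (H n0 n0); auto.
Qed.

Definition mn (P : nat -> Prop) : Rbar :=
  match excluded_middle_informative (exists n, P n) with
  | left h => Finite (INR (proj1_sig (constructive_indefinite_description _ (least P h))))
  | right _ => p_infty
  end.

Lemma mn_spec P :
  (exists n, P n /\ (forall m, P m -> (n <= m)%nat) /\ mn P = Finite (INR n)) \/
  ((forall n, ~ P n) /\ mn P = p_infty).
Proof.
  unfold mn. destruct excluded_middle_informative as [h|h].
  - left. destruct constructive_indefinite_description as [n [h1 h2]]. simpl. eauto.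
  - right. split; auto. intros n hn. apply h. eauto.
Qed.

Lemma mn_ext P Q : (forall n, P n <-> Q n) -> mn P = mn Q.
Proof.
  intro e. destruct (mn_spec P) as [[n [p1 [p2 p3]]]|[p1 p2]];
  destruct (mn_spec Q) as [[m [q1 [q2 q3]]]|[q1 q2]]; rewrite ?p3, ?q3, ?p2, ?q2.
  - f_equal. f_equal. apply Nat.le_antisymm; [apply p2, e | apply q2, e]; auto.
  - exfalso. apply (q1 n), e, p1.
  - exfalso. apply (p1 m), e, q1.
  - reflexivity.
Qed.

Lemma ceil_ge (n : nat) (r : R) : INR n <= r -> (Z.of_nat n <= Rceil r)%Z.
Proof.
  intro h. unfold Rceil. destruct (archimed (- r)) as [h1 h2].
  assert (IZR (up (- r)) <= IZR (1 - Z.of_nat n)).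
  { rewrite minus_IZR, <- INR_IZR_INZ. lra. }
  apply le_IZR in H. lia.
Qed.

Definition Wr {S} (mul : S -> S -> S) (M : list S) n x y : Prop :=
  exists w, Forall (fun z => In z M) w /\ w <> [] /\ (length w <= n)%nat /\ y = fold_right mul x w.
Definition Pr {S} (mul : S -> S -> S) (M : list S) n x y : Prop :=
  x = y \/ (Wr mul M n x y /\ Wr mul M n y x).

Lemma W_mono {S} (mul : S -> S -> S) M n m x y : Wr mul M n x y -> (n <= m)%nat -> Wr mul M m x y.
Proof. intros [w [a [b [c d]]]] h. exists w. repeat split; auto. lia. Qed.
Lemma P_mono {S} (mul : S -> S -> S) M n m x y : Pr mul M n x y -> (n <= m)%nat -> Pr mul M m x y.
Proof. intros [h|[h1 h2]] hm; [left|right]; auto. split; eapply W_mono; eauto. Qed.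
Lemma W_trans {S} (mul : S -> S -> S) M n m x y z :
  Wr mul M n x y -> Wr mul M m y z -> Wr mul M (n + m) x z.
Proof.
  intros [w [a [b [c d]]]] [v [a' [b' [c' d']]]]. exists (v ++ w). repeat split.
  - apply Forall_app; auto.
  - destruct v; simpl; [congruence | discriminate].
  - rewrite length_app. lia.
  - rewrite fold_right_app, <- d. exact d'.
Qed.
Lemma P_trans {S} (mul : S -> S -> S) M n m x y z :
  Pr mul M n x y -> Pr mul M m y z -> Pr mul M (n + m) x z.
Proof.
  intros [h|[h1 h2]] [g|[g1 g2]].
  - left; congruence.
  - subst. eapply P_mono. right; split; eauto. lia.
  - subst. eapply P_mono. right; split; eauto. lia.
  - destruct (classic (x = z)) as [e|e]. left; auto. right. split.
    + eapply W_trans; eauto.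
    + replace (n + m)%nat with (m + n)%nat by lia. eapply W_trans; eauto.
Qed.

Lemma W_right {S} {mul : S -> S -> S} {inv} (H : is_inverse_semigroup mul inv) M n x y z :
  Wr mul M n x y -> Wr mul M n (mul x z) (mul y z).
Proof. intros [w [a [b [c d]]]]. exists w. repeat split; auto. subst y. apply (fold_mul mul H). Qed.

Lemma W_L {S} {mul : S -> S -> S} {inv} (H : is_inverse_semigroup mul inv) M n m x y :
  Wr mul M n x y -> Wr mul M m y x -> L_rel mul inv x y.
Proof.
  intros [w [_ [_ [_ d]]]] [v [_ [_ [_ d']]]].
  pose proof (iotaA' H w x) as h1. pose proof (iotaA' H v y) as h2.
  rewrite <- d in h1. rewrite <- d' in h2. unfold L_rel.
  change (iota mul inv x = iota mul inv y).
  transitivity (mul (iota mul inv x) (iota mul inv y)). symmetry; exact h2.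
  rewrite (comm H); try apply (iota_idem H). exact h1.
Qed.

Lemma L_W {S} {mul : S -> S -> S} {inv} (H : is_inverse_semigroup mul inv) M :
  (forall s, exists a l, Forall (fun x => In x M \/ idempotent mul x) (a :: l) /\ s = sprod mul a l) ->
  forall x y, L_rel mul inv x y -> x <> y -> exists n, Wr mul M n x y.
Proof.
  intros hgen x y hL hne.
  destruct (hgen (mul y (inv x))) as [a [l [hF hs]]].
  assert (ey : y = fold_right mul x (a :: l)).
  { rewrite <- (sprod_fold mul H), <- hs, <- (assoc H). unfold L_rel in hL. rewrite hL.
    symmetry. apply (L1n H). }
  destruct (Key H M (a :: l) hF x) as [w [hw ew]].
  { rewrite <- ey. unfold iota. symmetry. exact hL. }
  exists (length w). exists w. repeat split; auto.
  - intro e; subst w. apply hne. rewrite ey, ew. reflexivity.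
  - rewrite ey, ew. reflexivity.
Qed.

Theorem proposition3p4 (S : Type) (mul : S -> S -> S) (inv : S -> S) :
  is_inverse_semigroup mul inv ->
  (quasi_finitely_generated mul inv <->
   exists d : S -> S -> Rbar,
     ext_metric d /\
     uniformly_proper mul d /\
     right_subinvariant mul d /\
     uniformly_discrete d /\
     components_are_L_classes mul inv d).
Proof.
  intro H. split.
  - intros [M [_ hgen]].
    set (d := fun x y => mn (fun n => Pr mul M n x y)).
    assert (P0 : forall x y, Pr mul M 0 x y -> x = y).
    { intros x y [h|[[w [_ [hw [hl _]]]] _]]; auto. destruct w; [congruence | simpl in hl; lia]. }
    exists d. split; [|split; [|split; [|split]]].
    + split; [|split; [|split]].
      * intros s t. unfold d. destruct (mn_spec (fun n => Pr mul M n s t)) as [[n [_ [_ e]]]|[_ e]];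
        rewrite e; simpl; auto. apply pos_INR.
      * intros s t. unfold d. destruct (mn_spec (fun n => Pr mul M n s t)) as [[n [p1 [p2 e]]]|[p1 e]];
        rewrite e; split; intro h.
        -- injection h as h. replace n with 0%nat in p1. auto.
           destruct n; auto. rewrite S_INR in h. pose proof (pos_INR n). lra.
        -- assert (n <= 0)%nat by (apply p2; left; auto). replace n with 0%nat by lia. reflexivity.
        -- discriminate.
        -- exfalso. apply (p1 0%nat). left; auto.
      * intros s t. unfold d. apply mn_ext. intro n. unfold Pr. intuition.
      * intros x y z. unfold d.
        destruct (mn_spec (fun n => Pr mul M n x y)) as [[n [p1 [p2 e1]]]|[p1 e1]]; rewrite e1;
        destruct (mn_spec (fun n => Pr mul M n y z)) as [[m [q1 [q2 e2]]]|[q1 e2]]; rewrite e2;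
        destruct (mn_spec (fun n => Pr mul M n x z)) as [[k [r1 [r2 e3]]]|[r1 e3]]; rewrite e3;
        simpl; auto.
        -- rewrite <- plus_INR. apply le_INR. apply r2. eapply P_trans; eauto.
        -- apply (r1 (n + m)%nat). eapply P_trans; eauto.
    + exists M. intros r x y hr hne hd. unfold d in hd.
      destruct (mn_spec (fun n => Pr mul M n x y)) as [[n [p1 [p2 e]]]|[p1 e]]; rewrite e in hd;
        simpl in hd; [|contradiction].
      destruct p1 as [p1|[[w [hw [hne' [hl hy]]]] _]]; [contradiction|].
      destruct w as [|a l]; [congruence|].
      exists a, l. split; [|split].
      * exact hw.
      * apply Z.le_trans with (Z.of_nat n). lia. apply ceil_ge; auto.
      * rewrite (sprod_fold mul H). exact hy.
    + intros s t x. unfold d.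
      destruct (mn_spec (fun n => Pr mul M n s t)) as [[n [p1 [p2 e1]]]|[p1 e1]]; rewrite e1;
      destruct (mn_spec (fun n => Pr mul M n (mul s x) (mul t x))) as [[k [r1 [r2 e3]]]|[r1 e3]];
        rewrite e3; simpl; auto.
      * apply le_INR, r2. destruct p1 as [p1|[p1 p1']]; [left; congruence|right].
        split; apply (W_right H); auto.
      * apply (r1 n). destruct p1 as [p1|[p1 p1']]; [left; congruence|right].
        split; apply (W_right H); auto.
    + exists 1. split; [lra|]. intros s t hst. unfold d.
      destruct (mn_spec (fun n => Pr mul M n s t)) as [[n [p1 [p2 e1]]]|[p1 e1]]; rewrite e1;
        simpl; auto.
      destruct n. exfalso. apply hst, P0, p1.
      replace 1 with (INR 1) by reflexivity. apply le_INR. lia.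
    + intros s t. unfold d.
      destruct (mn_spec (fun n => Pr mul M n s t)) as [[n [p1 [p2 e1]]]|[p1 e1]]; rewrite e1;
        split; intro h.
      * destruct p1 as [p1|[p1 p1']]. subst; reflexivity. eapply (W_L H); eauto.
      * reflexivity.
      * discriminate.
      * exfalso. destruct (classic (s = t)) as [e|e]. apply (p1 0%nat); left; auto.
        destruct (L_W H M hgen s t h e) as [n1 w1].
        assert (h' : L_rel mul inv t s) by (unfold L_rel in *; auto).
        destruct (L_W H M hgen t s h' (not_eq_sym e)) as [n2 w2].
        apply (p1 (n1 + n2)%nat). right. split; eapply W_mono; eauto; lia.
  - intros [d [hm [[F1 hp] [_ [_ hc]]]]].
    exists (F1 ++ map inv F1). split.
    + intros m hm'. apply in_app_or in hm'. apply in_or_app. destruct hm' as [h|h].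
      * right. apply in_map; auto.
      * left. apply in_map_iff in h. destruct h as [f [ef hf]]. subst m. rewrite (inv_inv H). auto.
    + intro s. set (e := mul (inv s) s).
      assert (he : idempotent mul e) by apply (iota_idem H).
      destruct (classic (s = e)) as [se|se].
      * exists s, []. split. constructor; [right; rewrite se; exact he | constructor]. reflexivity.
      * assert (hL : L_rel mul inv e s).
        { unfold L_rel. rewrite (idem_inv H e he). exact he. }
        apply hc in hL. unfold is_finite in hL. destruct hm as [hnn _].
        pose proof (hnn e s) as h0. rewrite <- hL in h0. simpl in h0.
        destruct (hp (real (d e s)) e s h0 (not_eq_sym se)) as [a [l [hF [_ hy]]]].
        { rewrite <- hL at 1. apply Rbar_le_refl. }
        exists a, (l ++ [e]). split.
        -- inversion hF as [|? ? ha hl']. constructor. left; apply in_or_app; auto.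
           apply Forall_app. split. eapply Forall_impl; [|exact hl']. intros; left; apply in_or_app; auto.
           constructor; auto.
        -- rewrite (sprod_snoc mul H). exact hy.
Qed.
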